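(* For every positive integer $n$ and every $r \in [\frac{\sqrt{3}}{4}, \frac{1}{2})$, we have $N_n(r) = \lceil \frac{n}{3} \rceil$.
   Context: For a positive integer $n$, let $\mathcal{P}_n$ denote the family of all sets of $n$ points in the Euclidean plane such that the distance between any two points of the set is at most $1$. For $0 < r \le 1$, let $N_n(r)$ be the largest integer $k$ such that for every $P \in \mathcal{P}_n$ there exists a circle of radius $r$ (i.e. a closed disc of radius $r$) which covers (contains) at least $k$ points of $P$. *)

(* Defs.v *)
From Stdlib Require Import Reals Lra List Arith.
Import ListNotations.
Open Scope R_scope.

Definition point := (R * R)%type.

Definition dist (p q : point) : R :=
  sqrt ((fst p - fst q) ^ 2 + (snd p - snd q) ^ 2).

(* P is a set of n points (listed without repetition) of diameter at most 1,
   i.e. P belongs to the family \mathcal{P}_n. *)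
Definition in_family (n : nat) (P : list point) : Prop :=
  NoDup P /\ length P = n /\
  (forall p q, In p P -> In q P -> dist p q <= 1).

Definition covered (P : list point) (c : point) (r : R) : nat :=
  length (filter (fun p => if Rle_dec (dist p c) r then true else false) P).

Definition guaranteed (n : nat) (r : R) (k : nat) : Prop :=
  forall P, in_family n P -> exists c : point, (k <= covered P c r)%nat.

Definition is_N (n : nat) (r : R) (k : nat) : Prop :=
  guaranteed n r k /\ (forall k', guaranteed n r k' -> (k' <= k)%nat).

Definition ceil_div3 (n : nat) : nat := ((n + 2) / 3)%nat.

(* Main.v *)
Require Import Defs.
From Stdlib Require Import Reals.
From Stdlib Require Import Lra Lia List FinFun.
Require Import Defs.
Import ListNotations.
Open Scope R_scope.

Definition mx (a b : R) := (a + b + Rabs (a - b)) / 2.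
Lemma mx_l a b : a <= mx a b.
Proof. unfold mx, Rabs; destruct Rcase_abs; lra. Qed.
Lemma mx_r a b : b <= mx a b.
Proof. unfold mx, Rabs; destruct Rcase_abs; lra. Qed.
Lemma mx_cases a b : mx a b = a \/ mx a b = b.
Proof. unfold mx, Rabs; destruct Rcase_abs; [right|left]; lra. Qed.

Fixpoint maxl (g : point -> R) (p0 : point) (l : list point) : R :=
  match l with [] => g p0 | p :: l' => mx (g p) (maxl g p0 l') end.

Lemma maxl_ub g p0 l p : In p (p0 :: l) -> g p <= maxl g p0 l.
Proof.
  induction l as [|a l IH]; simpl; intros H.
  - destruct H as [->|[]]; lra.
  - destruct H as [->|[->|H]].
    + pose proof (mx_r (g a) (maxl g p l)). specialize (IH (or_introl eq_refl)). lra.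
    + apply mx_l.
    + pose proof (mx_r (g a) (maxl g p0 l)). assert (g p <= maxl g p0 l) by (apply IH; simpl; auto). lra.
Qed.

Lemma maxl_att g p0 l : exists p, In p (p0 :: l) /\ maxl g p0 l = g p.
Proof.
  induction l as [|a l IH]; simpl.
  - exists p0; auto.
  - destruct (mx_cases (g a) (maxl g p0 l)) as [E|E]; rewrite E.
    + exists a; simpl; auto.
    + destruct IH as [p [Hp Ep]]. exists p. split; [simpl in *; tauto|auto].
Qed.

Lemma maxl_ext g h p0 l : (forall p, g p = h p) -> maxl g p0 l = maxl h p0 l.
Proof. intros E; induction l; simpl; [auto| rewrite IHl, E; auto]. Qed.

Definition minl g p0 l := - maxl (fun p => - g p) p0 l.
Lemma minl_lb g p0 l p : In p (p0 :: l) -> minl g p0 l <= g p.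
Proof. intros H. unfold minl. pose proof (maxl_ub (fun p => - g p) p0 l p H). simpl in *; lra. Qed.
Lemma minl_att g p0 l : exists p, In p (p0 :: l) /\ minl g p0 l = g p.
Proof. destruct (maxl_att (fun p => - g p) p0 l) as [p [H E]]. exists p; split; auto. unfold minl; rewrite E; lra. Qed.

Lemma mx_cont F1 F2 : continuity F1 -> continuity F2 -> continuity (fun t => mx (F1 t) (F2 t)).
Proof.
  intros H1 H2 x. unfold mx.
  assert (Ha : continuity_pt (fun t => Rabs (F1 t - F2 t)) x).
  { apply (continuity_pt_comp (fun t => F1 t - F2 t) Rabs x).
    - apply (continuity_pt_minus F1 F2 x); auto.
    - apply Rcontinuity_abs. }
  assert (Hs : continuity_pt (fun t => F1 t + F2 t + Rabs (F1 t - F2 t)) x).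
  { apply (continuity_pt_plus (fun t => F1 t + F2 t) (fun t => Rabs (F1 t - F2 t)) x); auto.
    apply (continuity_pt_plus F1 F2 x); auto. }
  apply (continuity_pt_mult (fun t => F1 t + F2 t + Rabs (F1 t - F2 t)) (fun _ => / 2) x); auto.
  apply continuity_pt_const. intros a b; auto.
Qed.

Lemma maxl_cont (G : R -> point -> R) p0 l :
  (forall p, continuity (fun t => G t p)) -> continuity (fun t => maxl (G t) p0 l).
Proof.
  intros H. induction l as [|a l IH]; simpl; auto.
  apply (mx_cont (fun t => G t a) (fun t => maxl (G t) p0 l)); auto.
Qed.

Lemma minl_cont (G : R -> point -> R) p0 l :
  (forall p, continuity (fun t => G t p)) -> continuity (fun t => minl (G t) p0 l).
Proof.
  intros H. unfold minl.
  apply (continuity_opp (fun t => maxl (fun p => - G t p) p0 l)).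
  apply (maxl_cont (fun t p => - G t p)). intros p. apply (continuity_opp (fun t => G t p)); auto.
Qed.

Definition s3 := sqrt 3.
Lemma s3_sq : s3 * s3 = 3.
Proof. unfold s3; apply sqrt_sqrt; lra. Qed.
Lemma s3_pos : 0 < s3.
Proof. unfold s3; apply sqrt_lt_R0; lra. Qed.
Lemma s3_lt2 : s3 < 2.
Proof. pose proof s3_sq; pose proof s3_pos; nra. Qed.

Definition dot (p v : point) := fst p * fst v + snd p * snd v.
Definition rot60 (v : point) : point := (fst v / 2 - s3 / 2 * snd v, s3 / 2 * fst v + snd v / 2).
Definition rot120 (v : point) : point := (- fst v / 2 - s3 / 2 * snd v, s3 / 2 * fst v - snd v / 2).
Definition u0 (t : R) : point := (cos t, sin t).

Definition F0 t p := dot p (u0 t).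
Definition F1 t p := dot p (rot60 (u0 t)).
Definition F2 t p := dot p (rot120 (u0 t)).

Lemma F1_sum t p : F1 t p = F0 t p + F2 t p.
Proof. unfold F0, F1, F2, dot, rot60, rot120; simpl; field. Qed.

Lemma u0_shift t : u0 (t + PI/3) = rot60 (u0 t).
Proof. unfold u0, rot60; simpl. rewrite cos_plus, sin_plus, cos_PI3, sin_PI3. fold s3. f_equal; field. Qed.

Lemma rot60_60 v : rot60 (rot60 v) = rot120 v.
Proof.
  unfold rot60, rot120; simpl.
  pose proof (f_equal (fun y => y * fst v) s3_sq). pose proof (f_equal (fun y => y * snd v) s3_sq).
  simpl in *. f_equal; lra.
Qed.
Lemma rot120_60 v : rot120 (rot60 v) = (- fst v, - snd v).
Proof.
  unfold rot60, rot120; simpl.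
  pose proof (f_equal (fun y => y * fst v) s3_sq). pose proof (f_equal (fun y => y * snd v) s3_sq).
  simpl in *. f_equal; lra.
Qed.

Lemma F0_shift t p : F0 (t + PI/3) p = F1 t p.
Proof. unfold F0, F1; rewrite u0_shift; auto. Qed.
Lemma F1_shift t p : F1 (t + PI/3) p = F2 t p.
Proof. unfold F1, F2; rewrite u0_shift, rot60_60; auto. Qed.
Lemma F2_shift t p : F2 (t + PI/3) p = - F0 t p.
Proof. unfold F2, F0; rewrite u0_shift, rot120_60. unfold dot; simpl. ring. Qed.

Lemma F0_cont p : continuity (fun t => F0 t p).
Proof. unfold F0, dot, u0; simpl. reg. Qed.
Lemma F1_cont p : continuity (fun t => F1 t p).
Proof. unfold F1, dot, rot60, u0; simpl. reg. Qed.
Lemma F2_cont p : continuity (fun t => F2 t p).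
Proof. unfold F2, dot, rot120, u0; simpl. reg. Qed.

Section Hex.
Variable p0 : point.
Variable l : list point.
Definition M0 t := maxl (F0 t) p0 l.
Definition M1 t := maxl (F1 t) p0 l.
Definition M2 t := maxl (F2 t) p0 l.
Definition m0 t := minl (F0 t) p0 l.
Definition m1 t := minl (F1 t) p0 l.
Definition m2 t := minl (F2 t) p0 l.
Definition DD t := (M0 t + M2 t - m1 t) - (M1 t - m0 t - m2 t).

Lemma DD_shift t : DD (t + PI/3) = - DD t.
Proof.
  unfold DD, M0, M1, M2, m0, m1, m2.
  rewrite (maxl_ext (F0 (t+PI/3)) (F1 t)) by apply F0_shift.
  rewrite (maxl_ext (F2 (t+PI/3)) (fun p => - F0 t p)) by apply F2_shift.
  rewrite (maxl_ext (F1 (t+PI/3)) (F2 t)) by apply F1_shift.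
  unfold minl.
  rewrite (maxl_ext (fun p => - F0 (t+PI/3) p) (fun p => - F1 t p)) by (intros; rewrite F0_shift; auto).
  rewrite (maxl_ext (fun p => - F1 (t+PI/3) p) (fun p => - F2 t p)) by (intros; rewrite F1_shift; auto).
  rewrite (maxl_ext (fun p => - F2 (t+PI/3) p) (F0 t)) by (intros; rewrite F2_shift; lra).
  lra.
Qed.

Lemma DD_cont : continuity DD.
Proof.
  unfold DD, M0, M1, M2, m0, m1, m2.
  pose proof (maxl_cont F0 p0 l F0_cont).
  pose proof (maxl_cont F1 p0 l F1_cont).
  pose proof (maxl_cont F2 p0 l F2_cont).
  pose proof (minl_cont F0 p0 l F0_cont).
  pose proof (minl_cont F1 p0 l F1_cont).
  pose proof (minl_cont F2 p0 l F2_cont).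
  repeat first [ apply continuity_minus | apply continuity_plus ]; auto.
Qed.

Lemma DD_zero : exists t, DD t = 0.
Proof.
  destruct (IVT_cor DD 0 (PI/3) DD_cont) as [t [_ Ht]].
  - pose proof PI_RGT_0; lra.
  - replace (PI/3) with (0 + PI/3) by lra. rewrite DD_shift. nra.
  - exists t; auto.
Qed.
End Hex.

Lemma key1 a e : a <= 1/2 -> e <= 1/2 -> 0 <= 2*a + e -> 0 <= a + 2*e -> a + e <= 1/2 ->
  2/3 * (a*a + e*e + (a+e)*(a+e)) - (a+e)/2 <= 1/8.
Proof.
  intros.
  pose proof (Rmult_le_pos (1/2 - a) (a + 2*e) ltac:(lra) ltac:(lra)).
  pose proof (Rmult_le_pos (1/2 - e) (2*a + e) ltac:(lra) ltac:(lra)).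
  pose proof (Rmult_le_pos (1/2 - a) (1/2 - e) ltac:(lra) ltac:(lra)).
  pose proof (Rmult_le_pos (2*a+e) (a + 2*e) ltac:(lra) ltac:(lra)).
  pose proof (Rmult_le_pos (1/2 - a - e) (a + 2*e) ltac:(lra) ltac:(lra)).
  pose proof (Rmult_le_pos (1/2 - a - e) (2*a + e) ltac:(lra) ltac:(lra)).
  nra.
Qed.


Ltac feed_lra H := repeat (match type of H with ?P -> _ => let h := fresh in assert (h : P) by lra; specialize (H h) end).

Lemma key_ineq a e : -1/2 <= a <= 1/2 -> -1/2 <= e <= 1/2 -> -1/2 <= a + e <= 1/2 ->
  2/3 * (a*a + e*e + (a+e)*(a+e)) - (a+e)/2 <= 1/8 \/
  2/3 * (a*a + e*e + (a+e)*(a+e)) + a/2 <= 1/8 \/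
  2/3 * (a*a + e*e + (a+e)*(a+e)) + e/2 <= 1/8.
Proof.
  intros Ha He Hs.
  destruct (Rle_lt_dec (-(a+e)) a); destruct (Rle_lt_dec (-(a+e)) e).
  - left. apply key1; lra.
  - right; right. pose proof (key1 (-(a+e)) a) as H. feed_lra H. nra.
  - right; left. pose proof (key1 e (-(a+e))) as H. feed_lra H. nra.
  - destruct (Rle_lt_dec a e).
    + right; left. pose proof (key1 e (-(a+e))) as H. feed_lra H. nra.
    + right; right. pose proof (key1 (-(a+e)) a) as H. feed_lra H. nra.
Qed.

Definition sqd (p c : point) := (fst p - fst c) ^ 2 + (snd p - snd c) ^ 2.

Lemma disc3 (p c : point) (C S : R) : C*C + S*S = 1 ->
  let a := dot p (C,S) - dot c (C,S) in
  let e := dot p (rot120 (C,S)) - dot c (rot120 (C,S)) in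
  -1/2 <= a <= 1/2 -> -1/2 <= e <= 1/2 -> -1/2 <= a + e <= 1/2 ->
  sqd p (fst c + fst (rot60 (C,S)) / 4, snd c + snd (rot60 (C,S)) / 4) <= 3/16 \/
  sqd p (fst c - C / 4, snd c - S / 4) <= 3/16 \/
  sqd p (fst c - fst (rot120 (C,S)) / 4, snd c - snd (rot120 (C,S)) / 4) <= 3/16.
Proof.
  intros HCS a e Ha He Hs. subst a e.
  destruct p as [px py]; destruct c as [cx cy].
  unfold sqd, rot60, rot120, dot in *; simpl in *.
  set (a := px * C + py * S - (cx * C + cy * S)) in *.
  set (e := px * (- C / 2 - s3 / 2 * S) + py * (s3 / 2 * C - S / 2) -
        (cx * (- C / 2 - s3 / 2 * S) + cy * (s3 / 2 * C - S / 2))) in *.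
  set (qx := px - cx). set (qy := py - cy).
  set (al := qx * C + qy * S). set (be := - qx * S + qy * C).
  assert (Ea : a = al) by (unfold a, al, qx, qy; ring).
  assert (Ee : e = - al / 2 + s3 / 2 * be) by (unfold e, al, be, qx, qy; field).
  assert (Eab : al * al + be * be = qx * qx + qy * qy).
  { unfold al, be. transitivity ((qx*qx+qy*qy)*(C*C+S*S)); [ring| rewrite HCS; ring]. }
  assert (Hsum : a*a + e*e + (a+e)*(a+e) = 3/2 * (al*al + be*be)).
  { rewrite Ea, Ee. pose proof (f_equal (fun y => y*be*be) s3_sq) as Hb; simpl in Hb. nra. }
  assert (Hq : qx*qx + qy*qy = 2/3 * (a*a + e*e + (a+e)*(a+e))) by (rewrite Hsum, Eab; field).
  assert (N60 : (C/2 - s3/2*S)*(C/2 - s3/2*S) + (s3/2*C + S/2)*(s3/2*C + S/2) = 1).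
  { pose proof s3_sq. nra. }
  assert (N120 : (-C/2 - s3/2*S)*(-C/2 - s3/2*S) + (s3/2*C - S/2)*(s3/2*C - S/2) = 1).
  { pose proof s3_sq. nra. }
  assert (D60 : qx * (C/2 - s3/2*S) + qy * (s3/2*C + S/2) = a + e) by (unfold a, e, qx, qy; field).
  assert (D0 : qx * C + qy * S = a) by (unfold a, qx, qy; ring).
  assert (D120 : qx * (-C/2 - s3/2*S) + qy * (s3/2*C - S/2) = e) by (unfold e, qx, qy; field).
  assert (Eqx : qx = px - cx) by reflexivity. assert (Eqy : qy = py - cy) by reflexivity.
  clearbody a e qx qy al be.
  destruct (key_ineq a e Ha He Hs) as [H|[H|H]]; [left|right;left|right;right].
  - replace (px - (cx + (C / 2 - s3 / 2 * S) / 4)) with (qx - (C / 2 - s3 / 2 * S) / 4) by (rewrite Eqx; field).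
    replace (py - (cy + (s3 / 2 * C + S / 2) / 4)) with (qy - (s3 / 2 * C + S / 2) / 4) by (rewrite Eqy; field).
    nra.
  - replace (px - (cx - C / 4)) with (qx + C / 4) by (rewrite Eqx; field).
    replace (py - (cy - S / 4)) with (qy + S / 4) by (rewrite Eqy; field).
    nra.
  - replace (px - (cx - (- C / 2 - s3 / 2 * S) / 4)) with (qx + (- C / 2 - s3 / 2 * S) / 4) by (rewrite Eqx; field).
    replace (py - (cy - (s3 / 2 * C - S / 2) / 4)) with (qy + (s3 / 2 * C - S / 2) / 4) by (rewrite Eqy; field).
    nra.
Qed.

Lemma sq_of_dist p q : dist p q <= 1 -> sqd p q <= 1.
Proof.
  unfold dist, sqd. intros H.
  assert (0 <= (fst p - fst q) ^ 2 + (snd p - snd q) ^ 2) by (pose proof (pow2_ge_0 (fst p - fst q)); pose proof (pow2_ge_0 (snd p - snd q)); lra).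
  pose proof (sqrt_sqrt _ H0). pose proof (sqrt_pos ((fst p - fst q) ^ 2 + (snd p - snd q) ^ 2)). nra.
Qed.

Lemma width (u p q : point) : fst u * fst u + snd u * snd u = 1 -> dist p q <= 1 -> dot p u - dot q u <= 1.
Proof.
  intros Hu Hd. apply sq_of_dist in Hd. unfold sqd, dot in *.
  destruct u as [ux uy]; destruct p as [px py]; destruct q as [qx qy]; simpl in *.
  assert (E : px * ux + py * uy - (qx * ux + qy * uy) = (px - qx) * ux + (py - qy) * uy) by ring.
  rewrite E.
  assert (((px - qx) * ux + (py - qy) * uy)^2 <= 1).
  { assert (((px - qx) * ux + (py - qy) * uy)^2 + ((px - qx) * uy - (py - qy) * ux)^2 = ((px - qx) ^ 2 + (py - qy) ^ 2) * (ux*ux+uy*uy)) by ring.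
    rewrite Hu in H. pose proof (pow2_ge_0 ((px - qx) * uy - (py - qy) * ux)). nra. }
  nra.
Qed.

Lemma dist_of_sqd p c r : sqd p c <= 3/16 -> s3/4 <= r -> dist p c <= r.
Proof.
  intros H Hr. unfold dist. fold (sqd p c).
  pose proof s3_pos. pose proof s3_sq.
  assert (0 <= r) by lra.
  rewrite <- (sqrt_square r) by auto.
  apply sqrt_le_1_alt. nra.
Qed.

Lemma cover (p0 : point) (l : list point) (r : R) : s3/4 <= r ->
  (forall p q, In p (p0::l) -> In q (p0::l) -> dist p q <= 1) ->
  exists c1 c2 c3, forall p, In p (p0::l) -> dist p c1 <= r \/ dist p c2 <= r \/ dist p c3 <= r.
Proof.
  intros Hr Hdiam.
  destruct (DD_zero p0 l) as [t Ht].
  unfold DD in Ht.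
  set (C := cos t) in *. set (S := sin t) in *.
  assert (HCS : C * C + S * S = 1).
  { pose proof (sin2_cos2 t). unfold Rsqr in H. unfold C, S. lra. }
  assert (N60 : fst (rot60 (u0 t)) * fst (rot60 (u0 t)) + snd (rot60 (u0 t)) * snd (rot60 (u0 t)) = 1).
  { unfold rot60, u0; simpl; fold C S. pose proof s3_sq. nra. }
  assert (N120 : fst (rot120 (u0 t)) * fst (rot120 (u0 t)) + snd (rot120 (u0 t)) * snd (rot120 (u0 t)) = 1).
  { unfold rot120, u0; simpl; fold C S. pose proof s3_sq. nra. }
  assert (N0 : fst (u0 t) * fst (u0 t) + snd (u0 t) * snd (u0 t) = 1) by (unfold u0; simpl; fold C S; lra).
  assert (W0 : M0 p0 l t - m0 p0 l t <= 1).
  { unfold M0, m0. destruct (maxl_att (F0 t) p0 l) as [p [Hp ->]]. destruct (minl_att (F0 t) p0 l) as [q [Hq ->]].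
    apply width; auto. }
  assert (W1 : M1 p0 l t - m1 p0 l t <= 1).
  { unfold M1, m1. destruct (maxl_att (F1 t) p0 l) as [p [Hp ->]]. destruct (minl_att (F1 t) p0 l) as [q [Hq ->]].
    apply width; auto. }
  assert (W2 : M2 p0 l t - m2 p0 l t <= 1).
  { unfold M2, m2. destruct (maxl_att (F2 t) p0 l) as [p [Hp ->]]. destruct (minl_att (F2 t) p0 l) as [q [Hq ->]].
    apply width; auto. }
  set (A0 := M0 p0 l t) in *. set (A1 := M1 p0 l t) in *. set (A2 := M2 p0 l t) in *.
  set (B0 := m0 p0 l t) in *. set (B1 := m1 p0 l t) in *. set (B2 := m2 p0 l t) in *.
  set (t' := Rmax (A1 - 1/2) (A0 + A2 - 1)).
  set (x := Rmax (A0 - 1/2) (t' - (B2 + 1/2))).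
  set (z := t' - x).
  assert (Ht1 : A1 - 1/2 <= t' /\ A0 + A2 - 1 <= t' /\ t' <= B1 + 1/2 /\ t' <= B0 + B2 + 1).
  { unfold t', Rmax; destruct Rle_dec; lra. }
  assert (Hx : A0 - 1/2 <= x <= B0 + 1/2 /\ A2 - 1/2 <= z <= B2 + 1/2).
  { unfold z, x, Rmax; destruct Rle_dec; lra. }
  assert (Hxz : A1 - 1/2 <= x + z <= B1 + 1/2) by (unfold z; lra).
  set (be := (2 * z + x) / s3).
  set (c := (x * C - be * S, x * S + be * C)).
  assert (Dc0 : dot c (C, S) = x).
  { unfold c, dot; simpl. transitivity (x * (C*C+S*S)); [ring | rewrite HCS; ring]. }
  assert (Dc2 : dot c (rot120 (C, S)) = z).
  { unfold c, dot, rot120; simpl. pose proof s3_pos.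
    transitivity ((C*C+S*S) * (- x / 2 + s3 / 2 * be)); [field | rewrite HCS; unfold be; field; lra]. }
  exists (fst c + fst (rot60 (C,S)) / 4, snd c + snd (rot60 (C,S)) / 4).
  exists (fst c - C / 4, snd c - S / 4).
  exists (fst c - fst (rot120 (C,S)) / 4, snd c - snd (rot120 (C,S)) / 4).
  intros p Hp.
  assert (Bp0 : B0 <= F0 t p <= A0) by (split; [apply minl_lb | apply maxl_ub]; auto).
  assert (Bp1 : B1 <= F1 t p <= A1) by (split; [apply minl_lb | apply maxl_ub]; auto).
  assert (Bp2 : B2 <= F2 t p <= A2) by (split; [apply minl_lb | apply maxl_ub]; auto).
  rewrite F1_sum in Bp1.
  unfold F0, F2, u0 in Bp0, Bp1, Bp2. fold C S in Bp0, Bp1, Bp2.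
  destruct (disc3 p c C S HCS) as [H|[H|H]]; try (rewrite ?Dc0, ?Dc2; lra).
  - left. apply dist_of_sqd; auto.
  - right; left. apply dist_of_sqd; auto.
  - right; right. apply dist_of_sqd; auto.
Qed.

Lemma covered_cons p L c r : covered (p :: L) c r =
  ((if Rle_dec (dist p c) r then 1 else 0) + covered L c r)%nat.
Proof. unfold covered; simpl. destruct Rle_dec; reflexivity. Qed.

Lemma covered_app L1 L2 c r : covered (L1 ++ L2) c r = (covered L1 c r + covered L2 c r)%nat.
Proof. unfold covered. rewrite filter_app, length_app. reflexivity. Qed.

Lemma covered_le L c r : (covered L c r <= length L)%nat.
Proof. apply filter_length_le. Qed.

Lemma covered_pos L c r : (0 < covered L c r)%nat -> exists p, In p L /\ dist p c <= r.
Proof.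
  induction L as [|a L IH]; intros H.
  - unfold covered in H; simpl in H; lia.
  - rewrite covered_cons in H. destruct (Rle_dec (dist a c) r).
    + exists a; simpl; auto.
    + destruct (IH ltac:(lia)) as [p [Hp Hd]]. exists p; simpl; auto.
Qed.

Lemma count3 L c1 c2 c3 r :
  (forall p, In p L -> dist p c1 <= r \/ dist p c2 <= r \/ dist p c3 <= r) ->
  (length L <= covered L c1 r + covered L c2 r + covered L c3 r)%nat.
Proof.
  induction L as [|a L IH]; intros H; simpl; [lia|].
  rewrite !covered_cons.
  assert (IH' := IH (fun p Hp => H p (or_intror Hp))).
  destruct (H a (or_introl eq_refl)) as [h|[h|h]];
  repeat destruct Rle_dec; try lra; lia.
Qed.

Lemma ceil_sum n : ((n+2)/3 + (n+1)/3 + n/3 = n)%nat.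
Proof.
 pose proof (Nat.div_mod n 3). pose proof (Nat.mod_upper_bound n 3).
 remember (n/3)%nat as q. remember (n mod 3)%nat as m.
 assert (E: (n = m + q*3)%nat) by lia. rewrite E.
 replace (m + q*3 + 2)%nat with ((m+2) + q*3)%nat by lia.
 replace (m + q*3 + 1)%nat with ((m+1) + q*3)%nat by lia.
 rewrite !Nat.div_add by lia.
 destruct m as [|[|[|k]]]; simpl; lia.
Qed.

Lemma ceil_pig n a b c : (n <= a + b + c)%nat -> ((n+2)/3 <= a \/ (n+2)/3 <= b \/ (n+2)/3 <= c)%nat.
Proof.
 intros. pose proof (Nat.div_mod (n+2) 3). pose proof (Nat.mod_upper_bound (n+2) 3). lia.
Qed.

Lemma guaranteed_part n r : (0 < n)%nat -> s3 / 4 <= r -> guaranteed n r (ceil_div3 n).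
Proof.
  intros Hn Hr P [HND [Hlen Hd]].
  destruct P as [|p0 l]; [simpl in Hlen; lia|].
  destruct (cover p0 l r Hr Hd) as [c1 [c2 [c3 Hc]]].
  pose proof (count3 _ c1 c2 c3 r Hc) as H. rewrite Hlen in H.
  unfold ceil_div3.
  destruct (ceil_pig _ _ _ _ H) as [h|[h|h]]; eauto.
Qed.

Lemma s3_gt1 : 1 < s3.
Proof. pose proof s3_sq; pose proof s3_pos; nra. Qed.

Lemma sqd_of_dist p c r : dist p c <= r -> sqd p c <= r * r.
Proof.
  unfold dist. fold (sqd p c). intros H.
  assert (0 <= sqd p c) by (unfold sqd; pose proof (pow2_ge_0 (fst p - fst c)); pose proof (pow2_ge_0 (snd p - snd c)); lra).
  pose proof (sqrt_sqrt _ H0). pose proof (sqrt_pos (sqd p c)). nra.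
Qed.

Lemma two_in_disc p q c r : dist p c <= r -> dist q c <= r -> sqd p q <= 4 * (r * r).
Proof.
  intros H1 H2. apply sqd_of_dist in H1. apply sqd_of_dist in H2. unfold sqd in *.
  pose proof (pow2_ge_0 (fst p + fst q - 2 * fst c)). pose proof (pow2_ge_0 (snd p + snd q - 2 * snd c)).
  nra.
Qed.

Lemma sep3 L1 L2 L3 c r K :
  (forall p q, In p L1 -> In q L2 -> 4 * (r*r) < sqd p q) ->
  (forall p q, In p L1 -> In q L3 -> 4 * (r*r) < sqd p q) ->
  (forall p q, In p L2 -> In q L3 -> 4 * (r*r) < sqd p q) ->
  (length L1 <= K)%nat -> (length L2 <= K)%nat -> (length L3 <= K)%nat ->
  (covered (L1 ++ L2 ++ L3) c r <= K)%nat.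
Proof.
  intros S12 S13 S23 K1 K2 K3.
  rewrite !covered_app.
  pose proof (covered_le L1 c r). pose proof (covered_le L2 c r). pose proof (covered_le L3 c r).
  assert (N12 : ~ (0 < covered L1 c r /\ 0 < covered L2 c r)%nat).
  { intros [h1 h2]. destruct (covered_pos _ _ _ h1) as [p [Hp Dp]]. destruct (covered_pos _ _ _ h2) as [q [Hq Dq]].
    pose proof (two_in_disc p q c r Dp Dq). pose proof (S12 p q Hp Hq). lra. }
  assert (N13 : ~ (0 < covered L1 c r /\ 0 < covered L3 c r)%nat).
  { intros [h1 h2]. destruct (covered_pos _ _ _ h1) as [p [Hp Dp]]. destruct (covered_pos _ _ _ h2) as [q [Hq Dq]].
    pose proof (two_in_disc p q c r Dp Dq). pose proof (S13 p q Hp Hq). lra. }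
  assert (N23 : ~ (0 < covered L2 c r /\ 0 < covered L3 c r)%nat).
  { intros [h1 h2]. destruct (covered_pos _ _ _ h1) as [p [Hp Dp]]. destruct (covered_pos _ _ _ h2) as [q [Hq Dq]].
    pose proof (two_in_disc p q c r Dp Dq). pose proof (S23 p q Hp Hq). lra. }
  lia.
Qed.

Section Config.
Variable n : nat.
Variable g : R.
Hypothesis g_pos : 0 < g.
Hypothesis g_le1 : g <= 1.
Definition hh := g / (8 * (INR n + 1)).
Lemma hh_pos : 0 < hh.
Proof. unfold hh. pose proof (pos_INR n). apply Rdiv_lt_0_compat; lra. Qed.
Lemma off_bound i : (i < n)%nat -> 0 <= INR i * hh <= g / 8.
Proof.
  intros Hi. pose proof hh_pos. pose proof (pos_INR i).
  assert (INR i <= INR n) by (apply le_INR; lia).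
  split; [nra|]. unfold hh.
  pose proof (pos_INR n).
  apply (Rmult_le_reg_r (8 * (INR n + 1))); [lra|].
  field_simplify; [|lra]. nra.
Qed.

Definition fA (i : nat) : point := (INR i * hh, 0).
Definition fB (i : nat) : point := (1 - INR i * hh, 0).
Definition fC (i : nat) : point := (1/2, s3/2 - INR i * hh).

Definition inA p := exists o, 0 <= o <= g/8 /\ p = (o, 0).
Definition inB p := exists o, 0 <= o <= g/8 /\ p = (1 - o, 0).
Definition inC p := exists o, 0 <= o <= g/8 /\ p = (1/2, s3/2 - o).

Lemma memA k p : (k <= n)%nat -> In p (map fA (seq 0 k)) -> inA p.
Proof. intros Hk H. apply in_map_iff in H as [i [<- Hi]]. apply in_seq in Hi. exists (INR i * hh); split; [apply off_bound; lia| reflexivity]. Qed.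
Lemma memB k p : (k <= n)%nat -> In p (map fB (seq 0 k)) -> inB p.
Proof. intros Hk H. apply in_map_iff in H as [i [<- Hi]]. apply in_seq in Hi. exists (INR i * hh); split; [apply off_bound; lia| reflexivity]. Qed.
Lemma memC k p : (k <= n)%nat -> In p (map fC (seq 0 k)) -> inC p.
Proof. intros Hk H. apply in_map_iff in H as [i [<- Hi]]. apply in_seq in Hi. exists (INR i * hh); split; [apply off_bound; lia| reflexivity]. Qed.

Lemma inj_hh i j : INR i * hh = INR j * hh -> i = j.
Proof. intros H. pose proof hh_pos. apply INR_eq. apply (Rmult_eq_reg_r hh); auto; lra. Qed.

Lemma NoDupA k : NoDup (map fA (seq 0 k)).
Proof. apply Injective_map_NoDup; [|apply seq_NoDup]. intros i j H. unfold fA in H. injection H; intros. apply inj_hh; auto. Qed.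
Lemma NoDupB k : NoDup (map fB (seq 0 k)).
Proof. apply Injective_map_NoDup; [|apply seq_NoDup]. intros i j H. unfold fB in H. injection H; intros. apply inj_hh; lra. Qed.
Lemma NoDupC k : NoDup (map fC (seq 0 k)).
Proof. apply Injective_map_NoDup; [|apply seq_NoDup]. intros i j H. unfold fC in H. injection H; intros. apply inj_hh; lra. Qed.

Ltac geo := pose proof s3_sq; pose proof s3_pos; pose proof s3_gt1; pose proof s3_lt2; unfold sqd; simpl; nra.

Definition inAny p := inA p \/ inB p \/ inC p.

Lemma diam p q : inAny p -> inAny q -> sqd p q <= 1.
Proof.
  intros [[o [Ho ->]]|[[o [Ho ->]]|[o [Ho ->]]]] [[o' [Ho' ->]]|[[o' [Ho' ->]]|[o' [Ho' ->]]]]; geo.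
Qed.

Lemma sepAB p q : inA p -> inB q -> 1 - g < sqd p q.
Proof. intros [o [Ho ->]] [o' [Ho' ->]]; geo. Qed.
Lemma sepAC p q : inA p -> inC q -> 1 - g < sqd p q.
Proof. intros [o [Ho ->]] [o' [Ho' ->]]; geo. Qed.
Lemma sepBC p q : inB p -> inC q -> 1 - g < sqd p q.
Proof. intros [o [Ho ->]] [o' [Ho' ->]]; geo. Qed.

Lemma disjAB p : inA p -> inB p -> False.
Proof. intros [o [Ho ->]] [o' [Ho' E]]. injection E; intros; lra. Qed.
Lemma disjAC p : inA p -> inC p -> False.
Proof. intros [o [Ho ->]] [o' [Ho' E]]. injection E; intros. pose proof s3_gt1; lra. Qed.
Lemma disjBC p : inB p -> inC p -> False.
Proof. intros [o [Ho ->]] [o' [Ho' E]]. injection E; intros. pose proof s3_gt1; lra. Qed.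
End Config.

Lemma upper_part n r : (0 < n)%nat -> sqrt 3 / 4 <= r -> r < 1/2 ->
  forall k', guaranteed n r k' -> (k' <= ceil_div3 n)%nat.
Proof.
  intros Hn Hr1 Hr2 k' Hg.
  fold s3 in Hr1. pose proof s3_pos.
  set (g := 1 - 4 * (r * r)).
  assert (g_pos : 0 < g) by (unfold g; nra).
  assert (g_le1 : g <= 1) by (unfold g; nra).
  set (n1 := ((n+2)/3)%nat). set (n2 := ((n+1)/3)%nat). set (n3 := (n/3)%nat).
  assert (Hn1 : (n1 <= n)%nat) by (unfold n1; pose proof (Nat.div_mod (n+2) 3); pose proof (Nat.mod_upper_bound (n+2) 3); lia).
  assert (Hn2 : (n2 <= n1)%nat) by (unfold n1, n2; apply Nat.Div0.div_le_mono; lia).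
  assert (Hn3 : (n3 <= n1)%nat) by (unfold n1, n3; apply Nat.Div0.div_le_mono; lia).
  set (LA := map (fA n g) (seq 0 n1)).
  set (LB := map (fB n g) (seq 0 n2)).
  set (LC := map (fC n g) (seq 0 n3)).
  assert (MA : forall p, In p LA -> inA g p) by (intros p Hp; exact (memA n g g_pos n1 p Hn1 Hp)).
  assert (MB : forall p, In p LB -> inB g p) by (intros p Hp; exact (memB n g g_pos n2 p ltac:(lia) Hp)).
  assert (MC : forall p, In p LC -> inC g p) by (intros p Hp; exact (memC n g g_pos n3 p ltac:(lia) Hp)).
  assert (Many : forall p, In p (LA ++ LB ++ LC) -> inAny g p).
  { intros p Hp. unfold inAny. apply in_app_or in Hp as [Hp|Hp]; [left; auto|].
    apply in_app_or in Hp as [Hp|Hp]; right; [left|right]; auto. }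
  assert (Hfam : in_family n (LA ++ LB ++ LC)).
  { split; [|split].
    - apply NoDup_app; [apply NoDupA; auto| apply NoDup_app; [apply NoDupB; auto|apply NoDupC; auto|]|].
      + intros a Ha Hb. eapply disjBC; eauto.
      + intros a Ha Hb. apply in_app_or in Hb as [Hb|Hb].
        * eapply disjAB; eauto.
        * eapply disjAC; eauto.
    - unfold LA, LB, LC. rewrite !length_app, !length_map, !length_seq. unfold n1, n2, n3. pose proof (ceil_sum n); lia.
    - intros p q Hp Hq. assert (sqd p q <= 1) by (apply diam with (g := g); auto).
      unfold dist. fold (sqd p q). rewrite <- sqrt_1. apply sqrt_le_1_alt. auto. }
  destruct (Hg _ Hfam) as [c Hc].
  assert (covered (LA ++ LB ++ LC) c r <= n1)%nat.
  { apply sep3.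
    - intros p q Hp Hq. assert (1 - g < sqd p q) by (apply sepAB with (g := g); auto). unfold g in *; lra.
    - intros p q Hp Hq. assert (1 - g < sqd p q) by (apply sepAC with (g := g); auto). unfold g in *; lra.
    - intros p q Hp Hq. assert (1 - g < sqd p q) by (apply sepBC with (g := g); auto). unfold g in *; lra.
    - unfold LA; rewrite length_map, length_seq; lia.
    - unfold LB; rewrite length_map, length_seq; lia.
    - unfold LC; rewrite length_map, length_seq; lia. }
  unfold ceil_div3. fold n1. lia.
Qed.

Theorem theorem2 (n : nat) (r : R) :
  (0 < n)%nat -> sqrt 3 / 4 <= r -> r < 1 / 2 ->
  is_N n r (ceil_div3 n).
Proof.
  intros Hn Hr1 Hr2. split.
  - apply guaranteed_part; auto.
  - apply upper_part; auto.
Qed.
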